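(* Let $d=1$. (1) If $y\in\mathbb{Q}$, then $\Pi^{y}=\{x\in\mathbb{Q}:(\mathbb{Z}x+y)\cap\mathbb{Z}\neq\emptyset\}$. (2) If $x\in\mathbb{Q}$, then $\Phi(x)=\{y\in\mathbb{Q}:(\mathbb{Z}x+y)\cap\mathbb{Z}\neq\emptyset\}$.
   Context: For $t\in\mathbb{R}$, $\|t\|$ is the distance from $t$ to $\mathbb{Z}$. Write $\mathbb{N}=\{1,2,\dots\}$. $\mathcal{D}$ is the set of all non-increasing $\psi:\mathbb{N}\to\mathbb{R}_{\ge0}$ with $\sum_n\psi(n)=\infty$. $W(\psi)$ is the set of $(x,y)\in\mathbb{R}^2$ with $\|nx+y\|<\psi(n)$ for infinitely many $n\in\mathbb{N}$, and $\Pi=\bigcap_{\psi\in\mathcal{D}}W(\psi)$. $\Phi(x)=\{y\in\mathbb{R}:(x,y)\in\Pi\}$ and $\Pi^{y}=\{x\in\mathbb{R}:(x,y)\in\Pi\}$. $\mathbb{Z}x+y=\{kx+y:k\in\mathbb{Z}\}$. *)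

(* Defs.v *)
From Stdlib Require Import Reals ZArith.
Open Scope R_scope.

(* ||t|| : distance from t to the nearest integer.
   With f = t - floor t in [0,1), the distance is min(f, 1 - f). *)
Definition distZ (t : R) : R :=
  Rmin (t - IZR (Int_part t)) (1 - (t - IZR (Int_part t))).

(* psi : N -> R_{>=0}, with N = {1,2,...}; we use psi : nat -> R and
   ignore the value at 0. *)
Definition in_D (psi : nat -> R) : Prop :=
  (forall n : nat, (1 <= n)%nat -> 0 <= psi n) /\
  (forall m n : nat, (1 <= m)%nat -> (m <= n)%nat -> psi n <= psi m) /\
  (forall M : R, exists N : nat, M < sum_f 1 N psi).

Definition in_W (psi : nat -> R) (x y : R) : Prop :=
  forall N : nat, exists n : nat,
    (N <= n)%nat /\ (1 <= n)%nat /\ distZ (INR n * x + y) < psi n.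

Definition in_Pi (x y : R) : Prop :=
  forall psi : nat -> R, in_D psi -> in_W psi x y.

Definition Phi (x : R) : R -> Prop := fun y => in_Pi x y.
Definition Pi_y (y : R) : R -> Prop := fun x => in_Pi x y.

Definition is_rational (x : R) : Prop :=
  exists p q : Z, (0 < q)%Z /\ x = IZR p / IZR q.

Definition orbit_hits_Z (x y : R) : Prop :=
  exists k m : Z, IZR k * x + y = IZR m.

(* Main.v *)
Require Import Defs.
From Stdlib Require Import Reals ZArith Lra Lia Psatz Classical.
Open Scope R_scope.


Lemma distZ_le (t : R) (m : Z) : distZ t <= Rabs (t - IZR m).
Proof.
  unfold distZ. destruct (base_Int_part t) as [H1 H2].
  set (z := Int_part t) in *.
  destruct (Z_le_gt_dec m z) as [Hm|Hm].
  - apply IZR_le in Hm. rewrite Rabs_right by lra.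
    apply Rle_trans with (t - IZR z). apply Rmin_l. lra.
  - assert (Hm' : (z + 1 <= m)%Z) by lia. apply IZR_le in Hm'.
    rewrite plus_IZR in Hm'. rewrite Rabs_left1 by lra.
    apply Rle_trans with (1 - (t - IZR z)). apply Rmin_r. lra.
Qed.

Lemma distZ_attained (t : R) : exists m : Z, distZ t = Rabs (t - IZR m).
Proof.
  unfold distZ. destruct (base_Int_part t) as [H1 H2].
  set (z := Int_part t) in *.
  destruct (Rle_dec (t - IZR z) (1 - (t - IZR z))) as [H|H].
  - exists z. rewrite Rmin_left by lra. rewrite Rabs_right by lra. reflexivity.
  - exists (z + 1)%Z. rewrite Rmin_right by lra. rewrite plus_IZR.
    rewrite Rabs_left1 by lra. ring.
Qed.

Lemma distZ_ge0 (t : R) : 0 <= distZ t.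
Proof. destruct (distZ_attained t) as [m ->]. apply Rabs_pos. Qed.

Lemma distZ_int (m : Z) : distZ (IZR m) = 0.
Proof.
  apply Rle_antisym; [|apply distZ_ge0].
  apply Rle_trans with (Rabs (IZR m - IZR m)). apply distZ_le.
  rewrite Rminus_diag, Rabs_R0. lra.
Qed.

Lemma sum_mono (g : nat -> R) : (forall k, 0 <= g k) ->
  forall N j, sum_f_R0 g N <= sum_f_R0 g (N + j).
Proof.
  intros Hg N j. induction j as [|j IH].
  - rewrite Nat.add_0_r. lra.
  - replace (N + S j)%nat with (S (N + j)) by lia. simpl. specialize (Hg (S (N+j))). lra.
Qed.

Lemma D_pos (psi : nat -> R) : in_D psi -> forall n, (1 <= n)%nat -> 0 < psi n.
Proof.
  intros [H0 [Hmon Hsum]] n0 Hn0.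
  destruct (Rle_lt_dec (psi n0) 0) as [Hle|Hlt]; [|exact Hlt].
  exfalso.
  set (g := fun k => psi (k + 1)%nat).
  assert (Hg : forall k, 0 <= g k) by (intro k; unfold g; apply H0; lia).
  assert (Hz : forall k, (n0 <= k + 1)%nat -> g k = 0).
  { intros k Hk. unfold g. apply Rle_antisym.
    - apply Rle_trans with (psi n0); [apply Hmon; lia | lra].
    - apply H0; lia. }
  assert (Hb : forall N, sum_f_R0 g N <= sum_f_R0 g n0).
  { intro N. destruct (Nat.le_gt_cases N n0) as [HN|HN].
    - replace n0 with (N + (n0 - N))%nat by lia. apply sum_mono; auto.
    - replace N with (n0 + (N - n0))%nat by lia. generalize (N - n0)%nat as j.
      induction j as [|j IH]. rewrite Nat.add_0_r; lra.
      replace (n0 + S j)%nat with (S (n0 + j)) by lia. simpl.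
      rewrite Hz by lia. lra. }
  destruct (Hsum (sum_f_R0 g n0)) as [N HN].
  unfold sum_f in HN. specialize (Hb (N - 1)%nat). unfold g in *. lra.
Qed.

Lemma const_D (c : R) : 0 < c -> in_D (fun _ => c).
Proof.
  intro Hc. split; [intros; lra|split; [intros; lra|]].
  intro M. destruct (archimed (M / c)) as [H1 _].
  exists (Z.to_nat (up (M / c))).
  unfold sum_f.
  assert (Hs : forall K, sum_f_R0 (fun _ => c) K = INR (S K) * c).
  { induction K as [|K IH]. simpl. lra. simpl sum_f_R0. rewrite IH.
    rewrite (S_INR (S K)). ring. }
  rewrite Hs.
  set (K := Z.to_nat (up (M / c))).
  assert (HK : M / c < INR (S (K - 1))).
  { destruct (Z_lt_le_dec (up (M/c)) 1) as [Hu|Hu].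
    - apply Rlt_le_trans with (IZR (up (M/c))); auto.
      apply Rle_trans with 1. apply IZR_le; lia. rewrite S_INR. pose proof (pos_INR (K-1)). lra.
    - apply Rlt_le_trans with (IZR (up (M/c))); auto.
      rewrite INR_IZR_INZ. apply IZR_le. unfold K. lia. }
  apply Rmult_lt_compat_r with (r := c) in HK; auto.
  unfold Rdiv in HK. rewrite Rmult_assoc, Rinv_l, Rmult_1_r in HK; lra.
Qed.

Lemma lower_not_Pi (x y c : R) : 0 < c ->
  (forall n : nat, (1 <= n)%nat -> c <= distZ (INR n * x + y)) -> ~ in_Pi x y.
Proof.
  intros Hc Hl HP. destruct (HP _ (const_D c Hc) 0%nat) as [n [_ [Hn Hd]]].
  specialize (Hl n Hn). lra.
Qed.

Lemma psi_not_Pi (x y : R) (psi : nat -> R) : in_D psi ->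
  (forall n : nat, (1 <= n)%nat -> psi n <= distZ (INR n * x + y)) -> ~ in_Pi x y.
Proof.
  intros HD Hl HP. destruct (HP _ HD 0%nat) as [n [_ [Hn Hd]]].
  specialize (Hl n Hn). lra.
Qed.

Lemma hit_Pi (x y : R) : is_rational x -> orbit_hits_Z x y -> in_Pi x y.
Proof.
  intros [p [q [Hq Hx]]] [k [m Hk]] psi HD N.
  set (t := (Z.abs k + Z.of_nat N + 1)%Z).
  set (nz := (k + q * t)%Z).
  assert (Hnz : (Z.of_nat N + 1 <= nz)%Z) by (unfold nz, t; nia).
  exists (Z.to_nat nz). split; [lia|split; [lia|]].
  rewrite INR_IZR_INZ, Z2Nat.id by lia.
  assert (E : IZR nz * x + y = IZR (m + t * p)).
  { unfold nz. rewrite plus_IZR, mult_IZR, plus_IZR, mult_IZR, <- Hk. rewrite Hx.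
    field. apply not_0_IZR; lia. }
  rewrite E, distZ_int. apply (D_pos psi HD). lia.
Qed.

Lemma rat_nohit (x y : R) : is_rational x -> is_rational y -> ~ orbit_hits_Z x y -> ~ in_Pi x y.
Proof.
  intros [p [q [Hq Hx]]] [a [b [Hb Hy]]] Hnh.
  assert (Hqb : 0 < IZR q * IZR b) by (apply Rmult_lt_0_compat; apply IZR_lt; lia).
  apply (lower_not_Pi x y (/ (IZR q * IZR b))); [apply Rinv_0_lt_compat; lra|].
  intros n Hn. destruct (distZ_attained (INR n * x + y)) as [m ->].
  set (K := (Z.of_nat n * p * b + a * q - m * q * b)%Z).
  assert (EK : (INR n * x + y - IZR m) * (IZR q * IZR b) = IZR K).
  { unfold K. rewrite minus_IZR, plus_IZR, !mult_IZR, <- INR_IZR_INZ. rewrite Hx, Hy.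
    field. split; apply not_0_IZR; lia. }
  assert (HK : K <> 0%Z).
  { intro HK0. apply Hnh. exists (Z.of_nat n), m. rewrite HK0 in EK.
    rewrite <- INR_IZR_INZ.
    assert (INR n * x + y - IZR m = 0).
    { apply Rmult_eq_reg_r with (IZR q * IZR b). lra. lra. }
    lra. }
  assert (HK1 : 1 <= Rabs (IZR K)).
  { rewrite <- abs_IZR. apply IZR_le. lia. }
  rewrite <- EK, Rabs_mult, (Rabs_right (IZR q * IZR b)) in HK1 by lra.
  apply Rmult_le_reg_r with (IZR q * IZR b); auto.
  rewrite Rinv_l by lra. lra.
Qed.

Lemma rat_irr (x y : R) : is_rational x -> ~ is_rational y -> ~ in_Pi x y.
Proof.
  intros [p [q [Hq Hx]]] Hy.
  assert (Hq' : 0 < IZR q) by (apply IZR_lt; lia).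
  assert (Hd : 0 < distZ (IZR q * y)).
  { destruct (distZ_attained (IZR q * y)) as [m Hm].
    destruct (Rle_lt_or_eq_dec _ _ (distZ_ge0 (IZR q * y))) as [H|H]; auto.
    exfalso. apply Hy. exists m, q. split; auto.
    rewrite Hm in H. symmetry in H.
    assert (H' : IZR q * y = IZR m) by (unfold Rabs in H; destruct Rcase_abs in H; lra).
    rewrite <- H'. field. lra. }
  apply (lower_not_Pi x y (distZ (IZR q * y) / IZR q)); [apply Rdiv_lt_0_compat; lra|].
  intros n Hn. destruct (distZ_attained (INR n * x + y)) as [m ->].
  pose proof (distZ_le (IZR q * y) (m * q - Z.of_nat n * p)%Z) as H.
  replace (IZR q * y - IZR (m * q - Z.of_nat n * p)) with (IZR q * (INR n * x + y - IZR m)) in H.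
  2:{ rewrite minus_IZR, !mult_IZR, <- INR_IZR_INZ, Hx. field. lra. }
  rewrite Rabs_mult, (Rabs_right (IZR q)) in H by lra.
  apply Rmult_le_reg_r with (IZR q); auto. unfold Rdiv. rewrite Rmult_assoc, Rinv_l by lra. lra.
Qed.

Definition Irr (x : R) : Prop := forall n m : Z, (1 <= n)%Z -> IZR n * x <> IZR m.

Definition stage (x : R) (a b c d : Z) : Prop :=
  (1 <= b)%Z /\ (1 <= d)%Z /\ (b * c - a * d = 1)%Z /\
  0 < IZR b * x - IZR a /\ 0 < IZR c - IZR d * x.

Lemma neighbor x a b c d : stage x a b c d ->
  forall n m : Z, (1 <= n)%Z -> (n < b + d)%Z ->
  Rmin (IZR b * x - IZR a) (IZR c - IZR d * x) <= Rabs (IZR n * x - IZR m).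
Proof.
  intros [Hb [Hd [Hdet [Hu Hv]]]] n m Hn1 Hn2.
  set (al := (c * n - d * m)%Z). set (ga := (b * m - a * n)%Z).
  assert (En : n = (al * b + ga * d)%Z).
  { unfold al, ga. transitivity (n * (b * c - a * d))%Z; [rewrite Hdet; ring | ring]. }
  assert (Em : m = (al * a + ga * c)%Z).
  { unfold al, ga. transitivity (m * (b * c - a * d))%Z; [rewrite Hdet; ring | ring]. }
  assert (E : IZR n * x - IZR m = IZR al * (IZR b * x - IZR a) - IZR ga * (IZR c - IZR d * x)).
  { rewrite En, Em. rewrite !plus_IZR, !mult_IZR. ring. }
  rewrite E.
  set (u := IZR b * x - IZR a) in *. set (v := IZR c - IZR d * x) in *.
  destruct (Z_le_gt_dec 1 al) as [Ha|Ha]; destruct (Z_le_gt_dec 1 ga) as [Hg|Hg].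
  - exfalso. nia.
  - apply IZR_le in Ha. assert (Hg' : (ga <= 0)%Z) by lia. apply IZR_le in Hg'.
    apply Rle_trans with u; [apply Rmin_l|].
    rewrite Rabs_right; nra.
  - apply IZR_le in Hg. assert (Ha' : (al <= 0)%Z) by lia. apply IZR_le in Ha'.
    apply Rle_trans with v; [apply Rmin_r|].
    rewrite Rabs_left1; nra.
  - exfalso. nia.
Qed.

Lemma balanced_bound x a b c d : stage x a b c d ->
  (IZR b * x - IZR a <= 2 * (IZR c - IZR d * x)) ->
  (IZR c - IZR d * x <= 2 * (IZR b * x - IZR a)) ->
  / (2 * IZR (b + d)) <= Rmin (IZR b * x - IZR a) (IZR c - IZR d * x).
Proof.
  intros [Hb [Hd [Hdet [Hu Hv]]]] H1 H2.
  assert (E : (IZR b * x - IZR a) * IZR d + (IZR c - IZR d * x) * IZR b = 1).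
  { assert (IZR (b * c - a * d) = 1) by (rewrite Hdet; reflexivity).
    rewrite minus_IZR, !mult_IZR in H. lra. }
  apply IZR_le in Hb. apply IZR_le in Hd. rewrite plus_IZR.
  assert (Hs : 0 < 2 * (IZR b + IZR d)) by lra.
  apply Rmin_case; apply Rmult_le_reg_r with (2 * (IZR b + IZR d)); auto;
  rewrite Rinv_l by lra; nra.
Qed.

Lemma balance x a b c d : stage x a b c d -> exists a' b' c' d',
  stage x a' b' c' d' /\ (b + d <= b' + d')%Z /\
  (IZR b' * x - IZR a' <= 2 * (IZR c' - IZR d' * x)) /\
  (IZR c' - IZR d' * x <= 2 * (IZR b' * x - IZR a')).
Proof.
  intros St. pose proof St as [Hb [Hd [Hdet [Hu Hv]]]].
  set (u := IZR b * x - IZR a) in *. set (v := IZR c - IZR d * x) in *.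
  destruct (Rle_lt_dec u v) as [Huv|Huv].
  - set (k := Int_part (v / u)). destruct (base_Int_part (v / u)) as [K1 K2]. fold k in K1, K2.
    assert (Hvu : 1 <= v / u) by (apply Rmult_le_reg_r with u; auto; unfold Rdiv; rewrite Rmult_assoc, Rinv_l; lra).
    assert (Hk : (1 <= k)%Z) by (assert (0 < IZR k) by lra; apply lt_IZR in H; lia).
    assert (Kl : IZR k * u <= v) by (apply Rmult_le_compat_r with (r := u) in K1; [|lra]; unfold Rdiv in K1; rewrite Rmult_assoc, Rinv_l, Rmult_1_r in K1; lra).
    assert (Kr : v < (IZR k + 1) * u) by (assert (v / u < IZR k + 1) by lra; apply Rmult_lt_compat_r with (r := u) in H; [|lra]; unfold Rdiv in H; rewrite Rmult_assoc, Rinv_l, Rmult_1_r in H; lra).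
    set (j := (k - 1)%Z).
    exists a, b, (c + j * a)%Z, (d + j * b)%Z.
    assert (Ev : IZR (c + j * a) - IZR (d + j * b) * x = v - IZR j * u).
    { unfold u, v. rewrite !plus_IZR, !mult_IZR. ring. }
    assert (Ej : IZR j = IZR k - 1) by (unfold j; rewrite minus_IZR; reflexivity).
    rewrite Ev. fold u.
    split; [split; [lia|split; [nia|split; [nia|split]]]|split; [nia|split]]; try exact Hu; try exact Hv; try lra; nra.
  - set (k := Int_part (u / v)). destruct (base_Int_part (u / v)) as [K1 K2]. fold k in K1, K2.
    assert (Hvu : 1 <= u / v) by (apply Rmult_le_reg_r with v; auto; unfold Rdiv; rewrite Rmult_assoc, Rinv_l; lra).
    assert (Hk : (1 <= k)%Z) by (assert (0 < IZR k) by lra; apply lt_IZR in H; lia).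
    assert (Kl : IZR k * v <= u) by (apply Rmult_le_compat_r with (r := v) in K1; [|lra]; unfold Rdiv in K1; rewrite Rmult_assoc, Rinv_l, Rmult_1_r in K1; lra).
    assert (Kr : u < (IZR k + 1) * v) by (assert (u / v < IZR k + 1) by lra; apply Rmult_lt_compat_r with (r := v) in H; [|lra]; unfold Rdiv in H; rewrite Rmult_assoc, Rinv_l, Rmult_1_r in H; lra).
    set (j := (k - 1)%Z).
    exists (a + j * c)%Z, (b + j * d)%Z, c, d.
    assert (Eu : IZR (b + j * d) * x - IZR (a + j * c) = u - IZR j * v).
    { unfold u, v. rewrite !plus_IZR, !mult_IZR. ring. }
    assert (Ej : IZR j = IZR k - 1) by (unfold j; rewrite minus_IZR; reflexivity).
    rewrite Eu. fold v.
    split; [split; [nia|split; [lia|split; [nia|split]]]|split; [nia|split]]; try exact Hu; try exact Hv; try lra; nra.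
Qed.

Lemma step x a b c d : Irr x -> stage x a b c d -> exists a' b' c' d',
  stage x a' b' c' d' /\ (b + d < b' + d')%Z.
Proof.
  intros HI [Hb [Hd [Hdet [Hu Hv]]]].
  assert (Hne : IZR (b + d) * x <> IZR (a + c)) by (apply HI; lia).
  rewrite !plus_IZR in Hne.
  destruct (Rlt_le_dec ((IZR b + IZR d) * x) (IZR a + IZR c)) as [H|H].
  - exists a, b, (a + c)%Z, (b + d)%Z. split; [|lia].
    split; [lia|split; [lia|split; [nia|split]]]; auto. rewrite !plus_IZR. lra.
  - exists (a + c)%Z, (b + d)%Z, c, d. split; [|lia].
    split; [lia|split; [lia|split; [nia|split]]]; auto. rewrite !plus_IZR.
    destruct H as [H|H]; [lra|]. exfalso; apply Hne; symmetry; exact H.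
Qed.

Lemma init x : Irr x -> exists a b c d, stage x a b c d.
Proof.
  intros HI. destruct (base_Int_part x) as [H1 H2].
  exists (Int_part x), 1%Z, (Int_part x + 1)%Z, 1%Z.
  split; [lia|split; [lia|split; [lia|split]]].
  - destruct H1 as [H1|H1]. lra. exfalso. apply (HI 1%Z (Int_part x)). lia. lra.
  - rewrite plus_IZR. lra.
Qed.

Lemma far x : Irr x -> forall M : nat, exists a b c d,
  stage x a b c d /\ (Z.of_nat M <= b + d)%Z /\
  (IZR b * x - IZR a <= 2 * (IZR c - IZR d * x)) /\
  (IZR c - IZR d * x <= 2 * (IZR b * x - IZR a)).
Proof.
  intros HI M. induction M as [|M IH].
  - destruct (init x HI) as [a [b [c [d St]]]].
    destruct (balance x a b c d St) as [a' [b' [c' [d' [St' [Hs [B1 B2]]]]]]].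
    exists a', b', c', d'. pose proof St' as [? [? _]]. split; [exact St'|split; [lia|auto]].
  - destruct IH as [a [b [c [d [St [Hs _]]]]]].
    destruct (step x a b c d HI St) as [a1 [b1 [c1 [d1 [St1 Hs1]]]]].
    destruct (balance x a1 b1 c1 d1 St1) as [a' [b' [c' [d' [St' [Hs' [B1 B2]]]]]]].
    exists a', b', c', d'. split; [exact St'|split; [lia|auto]].
Qed.

Lemma good_scale x : Irr x -> forall M : nat, exists s : nat, (M <= s)%nat /\ (2 <= s)%nat /\
  forall n : nat, (1 <= n)%nat -> (n < s)%nat -> / (2 * INR s) <= distZ (INR n * x).
Proof.
  intros HI M. destruct (far x HI (M + 2)) as [a [b [c [d [St [Hs [B1 B2]]]]]]].
  exists (Z.to_nat (b + d)). split; [lia|split; [lia|]].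
  intros n Hn1 Hn2.
  destruct (distZ_attained (INR n * x)) as [m ->].
  rewrite INR_IZR_INZ, Z2Nat.id by lia.
  eapply Rle_trans; [apply (balanced_bound x a b c d St B1 B2)|].
  rewrite INR_IZR_INZ. apply neighbor; auto; lia.
Qed.

Fixpoint fmin (x : R) (n : nat) : R :=
  match n with
  | O => 1
  | S k => Rmin (fmin x k) (distZ (INR (S k) * x))
  end.

Lemma fmin_ge0 x n : 0 <= fmin x n.
Proof.
  induction n; simpl. lra. apply Rmin_glb; auto. apply distZ_ge0.
Qed.

Lemma fmin_le x n : (1 <= n)%nat -> fmin x n <= distZ (INR n * x).
Proof. destruct n. lia. intros _. simpl fmin. apply Rmin_r. Qed.

Lemma fmin_mono x m n : (m <= n)%nat -> fmin x n <= fmin x m.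
Proof.
  induction 1. lra. simpl. eapply Rle_trans; [apply Rmin_l|auto].
Qed.

Lemma fmin_lb x c n : c <= 1 -> (forall m, (1 <= m)%nat -> (m <= n)%nat -> c <= distZ (INR m * x)) ->
  c <= fmin x n.
Proof.
  intros Hc H. induction n; cbn [fmin]. lra.
  apply Rmin_glb. apply IHn. intros; apply H; lia. apply H; lia.
Qed.

Lemma block (g : nat -> R) c N : forall j, (forall k, (N < k <= N + j)%nat -> c <= g k) ->
  sum_f_R0 g N + INR j * c <= sum_f_R0 g (N + j).
Proof.
  induction j as [|j IH]; intros H.
  - rewrite Nat.add_0_r. simpl. lra.
  - replace (N + S j)%nat with (S (N + j)) by lia. simpl sum_f_R0.
    rewrite S_INR. assert (c <= g (S (N + j))) by (apply H; lia).
    assert (sum_f_R0 g N + INR j * c <= sum_f_R0 g (N + j)) by (apply IH; intros; apply H; lia).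
    lra.
Qed.

Lemma irr_D x B : Irr x -> 1 <= B -> in_D (fun n => fmin x n / B).
Proof.
  intros HI HB. split; [|split].
  - intros n _. unfold Rdiv. apply Rmult_le_pos. apply fmin_ge0. left; apply Rinv_0_lt_compat; lra.
  - intros m n _ Hmn. unfold Rdiv. apply Rmult_le_compat_r. left; apply Rinv_0_lt_compat; lra.
    apply fmin_mono; auto.
  - set (g := fun k => fmin x (k + 1) / B).
    assert (Hg0 : forall k, 0 <= g k).
    { intro k. unfold g, Rdiv. apply Rmult_le_pos. apply fmin_ge0. left; apply Rinv_0_lt_compat; lra. }
    assert (Hdiv : forall K : nat, exists N, INR K / (4 * B) <= sum_f_R0 g N).
    { induction K as [|K IH].
      - exists 0%nat. simpl. unfold Rdiv. rewrite Rmult_0_l. apply Hg0.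
      - destruct IH as [N HN].
        destruct (good_scale x HI (2 * N + 4)) as [s [Hs1 [Hs2 Hs3]]].
        assert (Hsp : 0 < INR s) by (apply lt_0_INR; lia).
        assert (Hc : forall k, (N < k <= N + (s - 2 - N))%nat -> / (2 * INR s) / B <= g k).
        { intros k Hk. unfold g, Rdiv. apply Rmult_le_compat_r. left; apply Rinv_0_lt_compat; lra.
          apply fmin_lb.
          - rewrite <- Rinv_1. apply Rinv_le_contravar. lra.
            assert (2 <= INR s) by (apply (le_INR 2); lia). lra.
          - intros m Hm1 Hm2. apply Hs3; lia. }
        pose proof (block g _ N _ Hc) as Hb.
        exists (N + (s - 2 - N))%nat.
        assert (Hj : INR (s - 2 - N) * (/ (2 * INR s) / B) >= / (4 * B)).
        { rewrite minus_INR by lia. rewrite minus_INR by lia.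
          assert (HsN : 2 * INR N + 4 <= INR s).
          { replace (2 * INR N + 4) with (INR (2 * N + 4)). apply le_INR; lia.
            rewrite plus_INR, mult_INR. simpl. ring. }
          unfold Rdiv. apply Rle_ge.
          rewrite Rinv_mult. rewrite Rinv_mult.
          assert (0 < / B) by (apply Rinv_0_lt_compat; lra).
          assert (0 < / INR s) by (apply Rinv_0_lt_compat; lra).
          assert (Hi : INR s * / INR s = 1) by (apply Rinv_r; lra).
          simpl (INR 2).
          set (w := / INR s) in *. set (t := / B) in *.
          assert (Hm : (2 * INR N + 4) * w <= INR s * w) by (apply Rmult_le_compat_r; lra).
          assert (Hq : (INR s - 2 - INR N) * w >= / 2) by nra.
          assert (Ht : (INR s - 2 - INR N) * w * t >= / 2 * t) by (apply Rle_ge, Rmult_le_compat_r; lra).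
          replace ((INR s - 2 - INR N) * (/ 2 * w * t)) with ((INR s - 2 - INR N) * w * t * /2) by ring.
          replace (/4) with (/2 * /2) by (rewrite <- Rinv_mult; f_equal; ring).
          nra. }
        rewrite S_INR. unfold Rdiv in *. lra. }
    intro M.
    destruct (archimed (M * (4 * B))) as [H1 _].
    set (K := Z.to_nat (up (M * (4 * B)))).
    destruct (Hdiv K) as [N HN].
    exists (S N). unfold sum_f. replace (S N - 1)%nat with N by lia.
    replace (sum_f_R0 (fun x0 : nat => fmin x (x0 + 1) / B) N) with (sum_f_R0 g N) by reflexivity.
    apply Rlt_le_trans with (INR K / (4 * B)); auto.
    apply Rmult_lt_reg_r with (4 * B). lra.
    unfold Rdiv. rewrite Rmult_assoc, Rinv_l, Rmult_1_r by lra.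
    destruct (Z_lt_le_dec (up (M * (4 * B))) 0) as [Hu|Hu].
    + apply Rlt_le_trans with (IZR (up (M * (4 * B)))); auto.
      apply Rle_trans with 0. apply IZR_le; lia. apply pos_INR.
    + apply Rlt_le_trans with (IZR (up (M * (4 * B)))); auto.
      rewrite INR_IZR_INZ. apply IZR_le. unfold K. lia.
Qed.

Lemma irr_not_Pi x y : ~ is_rational x -> is_rational y -> ~ in_Pi x y.
Proof.
  intros Hx [a [b [Hb Hy]]].
  assert (Hb' : 1 <= IZR b) by (apply IZR_le; lia).
  set (x' := IZR b * x).
  assert (HI : Irr x').
  { intros n m Hn E. apply Hx. exists m, (n * b)%Z. split; [nia|].
    rewrite mult_IZR. rewrite <- E. unfold x'. field.
    split; [lra|]. apply not_0_IZR; lia. }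
  apply (psi_not_Pi x y _ (irr_D x' (IZR b) HI Hb')).
  intros n Hn. destruct (distZ_attained (INR n * x + y)) as [m ->].
  pose proof (fmin_le x' n Hn) as H1.
  pose proof (distZ_le (INR n * x') (b * m - a)%Z) as H2.
  replace (INR n * x' - IZR (b * m - a)) with (IZR b * (INR n * x + y - IZR m)) in H2.
  2:{ unfold x'. rewrite minus_IZR, mult_IZR, Hy. field. apply not_0_IZR; lia. }
  rewrite Rabs_mult, (Rabs_right (IZR b)) in H2 by lra.
  apply Rmult_le_reg_r with (IZR b). lra.
  unfold Rdiv. rewrite Rmult_assoc, Rinv_l by lra. lra.
Qed.

Theorem proposition20 :
  (forall y : R, is_rational y ->
     forall x : R, Pi_y y x <-> (is_rational x /\ orbit_hits_Z x y)) /\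
  (forall x : R, is_rational x ->
     forall y : R, Phi x y <-> (is_rational y /\ orbit_hits_Z x y)).
Proof.
  split.
  - intros y Hy x. unfold Pi_y. split.
    + intro H. destruct (classic (is_rational x)) as [Hx|Hx].
      * split; auto. destruct (classic (orbit_hits_Z x y)) as [Hh|Hh]; auto.
        exfalso. exact (rat_nohit x y Hx Hy Hh H).
      * exfalso. exact (irr_not_Pi x y Hx Hy H).
    + intros [Hx Hh]. apply hit_Pi; auto.
  - intros x Hx y. unfold Phi. split.
    + intro H. destruct (classic (is_rational y)) as [Hy|Hy].
      * split; auto. destruct (classic (orbit_hits_Z x y)) as [Hh|Hh]; auto.
        exfalso. exact (rat_nohit x y Hx Hy Hh H).
      * exfalso. exact (rat_irr x y Hx Hy H).
    + intros [Hy Hh]. apply hit_Pi; auto.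
Qed.
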